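(* There exists a finite planar graph $G$ such that the vertices of $G$ cannot be non-repetitively coloured using fewer than seven colours; that is, every non-repetitive vertex colouring of $G$ uses at least seven colours.
   Context: A finite sequence $a_1a_2\cdots a_n$ is called non-repetitive if it contains no two identical adjacent blocks, i.e. there are no $i$ and $m\ge 1$ with $i+2m-1\le n$ and $a_{i+j}=a_{i+m+j}$ for all $0\le j<m$. A vertex colouring of a graph $G$ is called non-repetitive if for every path $v_1v_2\cdots v_n$ in $G$ with distinct vertices, the sequence of colours of $v_1,\dots,v_n$ is non-repetitive. *)

(* Defs.v *)
From mathcomp Require Import all_boot.
From Stdlib Require Import Reals.
Set Implicit Arguments. Unset Strict Implicit. Unset Printing Implicit Defensive.

Definition nonrepetitive (s : seq nat) : Prop :=
  ~ exists i m : nat, 1 <= m /\ i + 2 * m <= size s /\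
      forall j, j < m -> nth 0 s (i + j) = nth 0 s (i + m + j).

Definition graph_path (n : nat) (e : rel 'I_n) (p : seq 'I_n) : Prop :=
  uniq p /\ (match p with [::] => true | x :: q => path e x q end).

Definition nonrep_colouring (n : nat) (e : rel 'I_n) (c : 'I_n -> nat) : Prop :=
  forall p, graph_path e p -> nonrepetitive (map c p).

Definition num_colours (n : nat) (c : 'I_n -> nat) : nat :=
  size (undup (map c (enum 'I_n))).

Definition simple_graph (n : nat) (e : rel 'I_n) : Prop :=
  symmetric e /\ irreflexive e.

Definition point : Type := (R * R)%type.

Definition pdist (a b : point) : R :=
  sqrt ((fst a - fst b)^2 + (snd a - snd b)^2)%R.

Definition cont01 (g : R -> point) : Prop :=
  forall t, (0 <= t <= 1)%R -> forall eps, (0 < eps)%R ->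
    exists delta, (0 < delta)%R /\
      forall s, (0 <= s <= 1)%R -> (Rabs (s - t) < delta)%R ->
        (pdist (g s) (g t) < eps)%R.

Definition inj01 (g : R -> point) : Prop :=
  forall s t, (0 <= s <= 1)%R -> (0 <= t <= 1)%R -> g s = g t -> s = t.

Definition planar (n : nat) (e : rel 'I_n) : Prop :=
  exists (pos : 'I_n -> point) (arc : 'I_n -> 'I_n -> R -> point),
    injective pos /\
    (forall u v, e u v ->
       cont01 (arc u v) /\ inj01 (arc u v) /\
       arc u v 0%R = pos u /\ arc u v 1%R = pos v /\
       (forall t w, (0 < t < 1)%R -> arc u v t <> pos w)) /\
    (forall u v u' v', e u v -> e u' v' ->
       ~ ((u = u' /\ v = v') \/ (u = v' /\ v = u')) ->
       forall t t', (0 < t < 1)%R -> (0 < t' < 1)%R ->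
         arc u v t <> arc u' v' t').

(* Main.v *)
Require Import Defs.
From Stdlib Require Import Reals Lra Lia ZArith Psatz.
From mathcomp Require Import all_boot.
Set Implicit Arguments. Unset Strict Implicit. Unset Printing Implicit Defensive.

Definition edges : seq (nat*nat) := [:: (0,1); (0,2); (0,3); (0,4); (0,5); (0,6); (0,8); (1,2); (1,3); (1,10); (2,3); (2,4); (2,5); (2,10); (3,4); (3,8); (3,10); (4,5); (4,6); (4,7); (4,8); (5,6); (5,7); (5,9); (6,7); (6,9); (7,9)].
Definition coords : seq (Z*Z) := [:: (0,0)%Z; (5832,0)%Z; (0,5832)%Z; (2916,1944)%Z; (972,2592)%Z; (486,3240)%Z; (540,2304)%Z; (747,2604)%Z; (1782,1836)%Z; (591,2716)%Z; (2430,2916)%Z].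
Definition cands : seq (seq nat) := [:: [:: 3; 4]; [:: 4; 6]; [:: 3; 10]; [:: 5; 7]; [:: 0; 2]; [:: 0; 5]; [:: 0; 8]; [:: 2; 5]; [:: 1; 3]; [:: 4; 5]; [:: 5; 6]; [:: 4; 8]; [:: 5; 9]; [:: 0; 1]; [:: 2; 4]; [:: 1; 2]; [:: 0; 4]; [:: 2; 10]; [:: 7; 9]; [:: 6; 7]; [:: 4; 7]; [:: 3; 8]; [:: 0; 3]; [:: 0; 6]; [:: 2; 3]; [:: 1; 10]; [:: 6; 9]; [:: 0; 1; 2; 3]; [:: 0; 1; 2; 4]; [:: 0; 1; 2; 5]; [:: 0; 1; 2; 10]; [:: 0; 1; 3; 2]; [:: 0; 1; 3; 4]; [:: 0; 1; 3; 8]; [:: 0; 1; 3; 10]; [:: 0; 1; 10; 2]; [:: 0; 1; 10; 3]; [:: 0; 2; 1; 3]; [:: 0; 2; 1; 10]; [:: 0; 2; 3; 1]; [:: 0; 2; 3; 4]; [:: 0; 2; 3; 8]; [:: 0; 2; 3; 10]; [:: 0; 2; 4; 3]; [:: 0; 2; 4; 5]; [:: 0; 2; 4; 6]; [:: 0; 2; 4; 7]; [:: 0; 2; 4; 8]; [:: 0; 2; 5; 4]; [:: 0; 2; 5; 6]; [:: 0; 2; 5; 7]; [:: 0; 2; 5; 9]; [:: 0; 2; 10; 1]; [:: 0; 2; 10; 3]; [:: 0; 3; 1; 2]; [:: 0; 3; 1; 10]; [:: 0; 3; 2; 1]; [:: 0; 3; 2; 4]; [:: 0; 3; 2; 5];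 [:: 0; 3; 2; 10]; [:: 0; 3; 4; 2]; [:: 0; 3; 4; 5]; [:: 0; 3; 4; 6]; [:: 0; 3; 4; 7]; [:: 0; 3; 4; 8]; [:: 0; 3; 8; 4]; [:: 0; 3; 10; 1]; [:: 0; 3; 10; 2]; [:: 0; 4; 2; 1]; [:: 0; 4; 2; 3]; [:: 0; 4; 2; 5]; [:: 0; 4; 2; 10]; [:: 0; 4; 3; 1]; [:: 0; 4; 3; 2]; [:: 0; 4; 3; 8]; [:: 0; 4; 3; 10]; [:: 0; 4; 5; 2]; [:: 0; 4; 5; 6]; [:: 0; 4; 5; 7]; [:: 0; 4; 5; 9]; [:: 0; 4; 6; 5]; [:: 0; 4; 6; 7]; [:: 0; 4; 6; 9]; [:: 0; 4; 7; 5]; [:: 0; 4; 7; 6]; [:: 0; 4; 7; 9]; [:: 0; 4; 8; 3]; [:: 0; 5; 2; 1]; [:: 0; 5; 2; 3]; [:: 0; 5; 2; 4]; [:: 0; 5; 2; 10]; [:: 0; 5; 4; 2]; [:: 0; 5; 4; 3]; [:: 0; 5; 4; 6]; [:: 0; 5; 4; 7]; [:: 0; 5; 4; 8]; [:: 0; 5; 6; 4]; [:: 0; 5; 6; 7]; [:: 0; 5; 6; 9]; [:: 0; 5; 7; 4]; [:: 0; 5; 7; 6]; [:: 0; 5; 7; 9]; [:: 0; 5; 9; 6]; [:: 0; 5; 9; 7]; [:: 0; 6; 4; 2]; [:: 0; 6; 4; 3]; [:: 0; 6; 4; 5]; [:: 0; 6; 4; 7]; [:: 0; 6; 4; 8];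 [:: 0; 6; 5; 2]; [:: 0; 6; 5; 4]; [:: 0; 6; 5; 7]; [:: 0; 6; 5; 9]; [:: 0; 6; 7; 4]; [:: 0; 6; 7; 5]; [:: 0; 6; 7; 9]; [:: 0; 6; 9; 5]; [:: 0; 6; 9; 7]; [:: 0; 8; 3; 1]; [:: 0; 8; 3; 2]; [:: 0; 8; 3; 4]; [:: 0; 8; 3; 10]; [:: 0; 8; 4; 2]; [:: 0; 8; 4; 3]; [:: 0; 8; 4; 5]; [:: 0; 8; 4; 6]; [:: 0; 8; 4; 7]; [:: 1; 0; 2; 3]; [:: 1; 0; 2; 4]; [:: 1; 0; 2; 5]; [:: 1; 0; 2; 10]; [:: 1; 0; 3; 2]; [:: 1; 0; 3; 4]; [:: 1; 0; 3; 8]; [:: 1; 0; 3; 10]; [:: 1; 0; 4; 2]; [:: 1; 0; 4; 3]; [:: 1; 0; 4; 5]; [:: 1; 0; 4; 6]; [:: 1; 0; 4; 7]; [:: 1; 0; 4; 8]; [:: 1; 0; 5; 2]; [:: 1; 0; 5; 4]; [:: 1; 0; 5; 6]; [:: 1; 0; 5; 7]; [:: 1; 0; 5; 9]; [:: 1; 0; 6; 4]; [:: 1; 0; 6; 5]; [:: 1; 0; 6; 7]; [:: 1; 0; 6; 9]; [:: 1; 0; 8; 3]; [:: 1; 0; 8; 4]; [:: 1; 2; 0; 3]; [:: 1; 2; 0; 4]; [:: 1; 2; 0; 5]; [:: 1; 2; 0; 6]; [:: 1; 2; 0; 8]; [:: 1; 2; 3; 4]; [:: 1; 2; 3; 8];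 [:: 1; 2; 3; 10]; [:: 1; 2; 4; 3]; [:: 1; 2; 4; 5]; [:: 1; 2; 4; 6]; [:: 1; 2; 4; 7]; [:: 1; 2; 4; 8]; [:: 1; 2; 5; 4]; [:: 1; 2; 5; 6]; [:: 1; 2; 5; 7]; [:: 1; 2; 5; 9]; [:: 1; 2; 10; 3]; [:: 1; 3; 0; 2]; [:: 1; 3; 0; 4]; [:: 1; 3; 0; 5]; [:: 1; 3; 0; 6]; [:: 1; 3; 0; 8]; [:: 1; 3; 2; 4]; [:: 1; 3; 2; 5]; [:: 1; 3; 2; 10]; [:: 1; 3; 4; 2]; [:: 1; 3; 4; 5]; [:: 1; 3; 4; 6]; [:: 1; 3; 4; 7]; [:: 1; 3; 4; 8]; [:: 1; 3; 8; 4]; [:: 1; 3; 10; 2]; [:: 1; 10; 2; 3]; [:: 1; 10; 2; 4]; [:: 1; 10; 2; 5]; [:: 1; 10; 3; 2]; [:: 1; 10; 3; 4]; [:: 1; 10; 3; 8]; [:: 2; 0; 1; 3]; [:: 2; 0; 1; 10]; [:: 2; 0; 3; 4]; [:: 2; 0; 3; 8]; [:: 2; 0; 3; 10]; [:: 2; 0; 4; 3]; [:: 2; 0; 4; 5]; [:: 2; 0; 4; 6]; [:: 2; 0; 4; 7]; [:: 2; 0; 4; 8]; [:: 2; 0; 5; 4]; [:: 2; 0; 5; 6]; [:: 2; 0; 5; 7]; [:: 2; 0; 5; 9]; [:: 2; 0; 6; 4]; [:: 2; 0; 6; 5]; [:: 2; 0; 6; 7]; [:: 2; 0; 6; 9];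 [:: 2; 0; 8; 3]; [:: 2; 0; 8; 4]; [:: 2; 1; 0; 3]; [:: 2; 1; 0; 4]; [:: 2; 1; 0; 5]; [:: 2; 1; 0; 6]; [:: 2; 1; 0; 8]; [:: 2; 1; 3; 4]; [:: 2; 1; 3; 8]; [:: 2; 1; 3; 10]; [:: 2; 1; 10; 3]; [:: 2; 3; 0; 4]; [:: 2; 3; 0; 5]; [:: 2; 3; 0; 6]; [:: 2; 3; 0; 8]; [:: 2; 3; 1; 10]; [:: 2; 3; 4; 5]; [:: 2; 3; 4; 6]; [:: 2; 3; 4; 7]; [:: 2; 3; 4; 8]; [:: 2; 3; 8; 4]; [:: 2; 4; 0; 3]; [:: 2; 4; 0; 5]; [:: 2; 4; 0; 6]; [:: 2; 4; 0; 8]; [:: 2; 4; 3; 8]; [:: 2; 4; 3; 10]; [:: 2; 4; 5; 6]; [:: 2; 4; 5; 7]; [:: 2; 4; 5; 9]; [:: 2; 4; 6; 5]; [:: 2; 4; 6; 7]; [:: 2; 4; 6; 9]; [:: 2; 4; 7; 5]; [:: 2; 4; 7; 6]; [:: 2; 4; 7; 9]; [:: 2; 4; 8; 3]; [:: 2; 5; 0; 3]; [:: 2; 5; 0; 4]; [:: 2; 5; 0; 6]; [:: 2; 5; 0; 8]; [:: 2; 5; 4; 3]; [:: 2; 5; 4; 6]; [:: 2; 5; 4; 7]; [:: 2; 5; 4; 8]; [:: 2; 5; 6; 4]; [:: 2; 5; 6; 7]; [:: 2; 5; 6; 9]; [:: 2; 5; 7; 4]; [:: 2; 5; 7; 6];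 [:: 2; 5; 7; 9]; [:: 2; 5; 9; 6]; [:: 2; 5; 9; 7]; [:: 2; 10; 1; 3]; [:: 2; 10; 3; 4]; [:: 2; 10; 3; 8]; [:: 3; 0; 1; 10]; [:: 3; 0; 2; 4]; [:: 3; 0; 2; 5]; [:: 3; 0; 2; 10]; [:: 3; 0; 4; 5]; [:: 3; 0; 4; 6]; [:: 3; 0; 4; 7]; [:: 3; 0; 4; 8]; [:: 3; 0; 5; 4]; [:: 3; 0; 5; 6]; [:: 3; 0; 5; 7]; [:: 3; 0; 5; 9]; [:: 3; 0; 6; 4]; [:: 3; 0; 6; 5]; [:: 3; 0; 6; 7]; [:: 3; 0; 6; 9]; [:: 3; 0; 8; 4]; [:: 3; 1; 0; 4]; [:: 3; 1; 0; 5]; [:: 3; 1; 0; 6]; [:: 3; 1; 0; 8]; [:: 3; 1; 2; 4]; [:: 3; 1; 2; 5]; [:: 3; 1; 2; 10]; [:: 3; 2; 0; 4]; [:: 3; 2; 0; 5]; [:: 3; 2; 0; 6]; [:: 3; 2; 0; 8]; [:: 3; 2; 1; 10]; [:: 3; 2; 4; 5]; [:: 3; 2; 4; 6]; [:: 3; 2; 4; 7]; [:: 3; 2; 4; 8]; [:: 3; 2; 5; 4]; [:: 3; 2; 5; 6]; [:: 3; 2; 5; 7]; [:: 3; 2; 5; 9]; [:: 3; 4; 0; 5]; [:: 3; 4; 0; 6]; [:: 3; 4; 0; 8]; [:: 3; 4; 2; 5]; [:: 3; 4; 2; 10]; [:: 3; 4; 5; 6]; [:: 3; 4; 5; 7];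 [:: 3; 4; 5; 9]; [:: 3; 4; 6; 5]; [:: 3; 4; 6; 7]; [:: 3; 4; 6; 9]; [:: 3; 4; 7; 5]; [:: 3; 4; 7; 6]; [:: 3; 4; 7; 9]; [:: 3; 8; 0; 4]; [:: 3; 8; 0; 5]; [:: 3; 8; 0; 6]; [:: 3; 8; 4; 5]; [:: 3; 8; 4; 6]; [:: 3; 8; 4; 7]; [:: 3; 10; 2; 4]; [:: 3; 10; 2; 5]; [:: 4; 0; 1; 10]; [:: 4; 0; 2; 5]; [:: 4; 0; 2; 10]; [:: 4; 0; 3; 8]; [:: 4; 0; 3; 10]; [:: 4; 0; 5; 6]; [:: 4; 0; 5; 7]; [:: 4; 0; 5; 9]; [:: 4; 0; 6; 5]; [:: 4; 0; 6; 7]; [:: 4; 0; 6; 9]; [:: 4; 2; 0; 5]; [:: 4; 2; 0; 6]; [:: 4; 2; 0; 8]; [:: 4; 2; 1; 10]; [:: 4; 2; 3; 8]; [:: 4; 2; 3; 10]; [:: 4; 2; 5; 6]; [:: 4; 2; 5; 7]; [:: 4; 2; 5; 9]; [:: 4; 3; 0; 5]; [:: 4; 3; 0; 6]; [:: 4; 3; 0; 8]; [:: 4; 3; 1; 10]; [:: 4; 3; 2; 5]; [:: 4; 3; 2; 10]; [:: 4; 5; 0; 6]; [:: 4; 5; 0; 8]; [:: 4; 5; 2; 10]; [:: 4; 5; 6; 7]; [:: 4; 5; 6; 9]; [:: 4; 5; 7; 6]; [:: 4; 5; 7; 9]; [:: 4; 5; 9; 6]; [:: 4; 5; 9; 7];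 [:: 4; 6; 0; 5]; [:: 4; 6; 0; 8]; [:: 4; 6; 5; 7]; [:: 4; 6; 5; 9]; [:: 4; 6; 7; 5]; [:: 4; 6; 7; 9]; [:: 4; 6; 9; 5]; [:: 4; 6; 9; 7]; [:: 4; 7; 5; 6]; [:: 4; 7; 5; 9]; [:: 4; 7; 6; 5]; [:: 4; 7; 6; 9]; [:: 4; 7; 9; 5]; [:: 4; 7; 9; 6]; [:: 4; 8; 0; 5]; [:: 4; 8; 0; 6]; [:: 4; 8; 3; 10]; [:: 5; 0; 1; 10]; [:: 5; 0; 2; 10]; [:: 5; 0; 3; 8]; [:: 5; 0; 3; 10]; [:: 5; 0; 4; 6]; [:: 5; 0; 4; 7]; [:: 5; 0; 4; 8]; [:: 5; 0; 6; 7]; [:: 5; 0; 6; 9]; [:: 5; 2; 0; 6]; [:: 5; 2; 0; 8]; [:: 5; 2; 1; 10]; [:: 5; 2; 3; 8]; [:: 5; 2; 3; 10]; [:: 5; 2; 4; 6]; [:: 5; 2; 4; 7]; [:: 5; 2; 4; 8]; [:: 5; 4; 0; 6]; [:: 5; 4; 0; 8]; [:: 5; 4; 2; 10]; [:: 5; 4; 3; 8]; [:: 5; 4; 3; 10]; [:: 5; 4; 6; 7]; [:: 5; 4; 6; 9]; [:: 5; 4; 7; 6]; [:: 5; 4; 7; 9]; [:: 5; 6; 0; 8]; [:: 5; 6; 4; 7]; [:: 5; 6; 4; 8]; [:: 5; 6; 7; 9]; [:: 5; 6; 9; 7]; [:: 5; 7; 4; 6]; [:: 5; 7; 4; 8];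 [:: 5; 7; 6; 9]; [:: 5; 7; 9; 6]; [:: 5; 9; 6; 7]; [:: 5; 9; 7; 6]; [:: 6; 0; 1; 10]; [:: 6; 0; 2; 10]; [:: 6; 0; 3; 8]; [:: 6; 0; 3; 10]; [:: 6; 0; 4; 7]; [:: 6; 0; 4; 8]; [:: 6; 0; 5; 7]; [:: 6; 0; 5; 9]; [:: 6; 4; 0; 8]; [:: 6; 4; 2; 10]; [:: 6; 4; 3; 8]; [:: 6; 4; 3; 10]; [:: 6; 4; 5; 7]; [:: 6; 4; 5; 9]; [:: 6; 4; 7; 9]; [:: 6; 5; 0; 8]; [:: 6; 5; 2; 10]; [:: 6; 5; 4; 7]; [:: 6; 5; 4; 8]; [:: 6; 5; 7; 9]; [:: 6; 5; 9; 7]; [:: 6; 7; 4; 8]; [:: 6; 7; 5; 9]; [:: 6; 9; 5; 7]; [:: 7; 4; 0; 8]; [:: 7; 4; 2; 10]; [:: 7; 4; 3; 8]; [:: 7; 4; 3; 10]; [:: 7; 4; 5; 9]; [:: 7; 4; 6; 9]; [:: 7; 5; 0; 8]; [:: 7; 5; 2; 10]; [:: 7; 5; 4; 8]; [:: 7; 5; 6; 9]; [:: 7; 6; 0; 8]; [:: 7; 6; 4; 8]; [:: 7; 6; 5; 9]; [:: 8; 0; 1; 10]; [:: 8; 0; 2; 10]; [:: 8; 0; 3; 10]; [:: 8; 0; 5; 9]; [:: 8; 0; 6; 9]; [:: 8; 3; 1; 10]; [:: 8; 3; 2; 10]; [:: 8; 4; 2; 10]; [:: 8; 4; 3; 10];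 [:: 8; 4; 5; 9]; [:: 8; 4; 6; 9]; [:: 8; 4; 7; 9]; [:: 9; 5; 2; 10]].

Definition adjb (u v : nat) : bool := ((u,v) \in edges) || ((v,u) \in edges).
Definition E : rel 'I_11 := fun u v => adjb u v.

Definition sqb (l : seq nat) : bool :=
  let m := (size l)./2 in (0 < m) && (size l == m + m) && (take m l == drop m l).

Fixpoint hasl (f : seq nat -> bool) (l : seq (seq nat)) : bool :=
  match l with [::] => false | x :: l' => if f x then true else hasl f l' end.

Fixpoint allc (f : nat -> bool) (l : seq nat) : bool :=
  match l with [::] => true | x :: l' => if f x then allc f l' else false end.

Definition leafb (lab' : seq nat) (p : seq nat) : bool :=
  all (fun i => i < size lab') p && sqb (map (fun i => nth 0 lab' i) p).

Definition step (rec : nat -> seq nat -> bool) (d : nat) (lab : seq nat) (col : nat) : bool :=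
  let lab' := rcons lab col in
  if hasl (leafb lab') cands then true else rec (if col == d then d.+1 else d) lab'.

Fixpoint search (fuel d : nat) (lab : seq nat) : bool :=
  match fuel with
  | 0 => false
  | f.+1 => allc (step (search f) d lab) (iota 0 (minn d.+1 6))
  end.

Lemma search_ok : search 11 0 [::].
Proof. vm_compute. reflexivity. Qed.

Lemma hasl_has f l : hasl f l = has f l.
Proof. by elim: l => //= x l IH; case: (f x). Qed.

Lemma allc_all f l : allc f l = all f l.
Proof. by elim: l => //= x l IH; case: (f x). Qed.

Definition pathb (p : seq nat) : bool :=
  [&& uniq p, all (fun i => i < 11) p & (match p with [::] => true | x :: q => path adjb x q end)].

Lemma cands_ok : all pathb cands.
Proof. vm_compute. reflexivity. Qed.

Lemma irr_ok : all (fun u => ~~ adjb u u) (iota 0 11).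
Proof. vm_compute. reflexivity. Qed.

Lemma all_I11 (P : nat -> bool) : all P (iota 0 11) -> forall u : 'I_11, P u.
Proof. by move=> /allP H u; apply: H; rewrite mem_iota /=. Qed.

Lemma E_path (x : nat) (q : seq nat) : path adjb x q -> all (fun i => i < 11) (x :: q) ->
  path E (inord x) (map (@inord 10) q).
Proof.
elim: q x => //= y q IH x /andP[hxy hq] /and3P[hx hy hall].
apply/andP; split; first by rewrite /E /= !inordK.
by apply: IH => //=; rewrite hy.
Qed.

Lemma graph_path_of p : pathb p -> graph_path E (map (@inord 10) p).
Proof.
case/and3P=> hu hall hp; split.
  rewrite map_inj_in_uniq // => x y /(allP hall) hx /(allP hall) hy /(congr1 (@nat_of_ord 11)).
  by rewrite !inordK.
case: p hu hall hp => //= x q _ hall hp; exact: E_path.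
Qed.

Section Sound.
Variable c : 'I_11 -> nat.
Hypothesis Hnr : nonrep_colouring E c.
Hypothesis Hnc : num_colours c <= 6.
Let cn (i : nat) : nat := c (inord i).

Lemma cn_codom i : cn i \in undup (map c (enum 'I_11)).
Proof. by rewrite mem_undup; apply: map_f; rewrite mem_enum. Qed.

Lemma size_st st : uniq st -> {subset st <= undup (map c (enum 'I_11))} -> size st <= 6.
Proof.
move=> hu hs; apply: leq_trans Hnc; rewrite /num_colours.
exact: uniq_leq_size.
Qed.

Lemma leaf_false lab' st p : p \in cands -> uniq st ->
  (forall i, i < size lab' -> cn i \in st /\ nth 0 lab' i = index (cn i) st) ->
  leafb lab' p -> False.
Proof.
move=> hp hu hinv /andP[hall hsq].
have hpb := allP cands_ok p hp.
have hg := graph_path_of hpb.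
have := Hnr hg; apply.
move: hsq; rewrite /sqb size_map; set m := (size p)./2.
case/andP=> /andP[hm hsz] /eqP htd.
exists 0, m; split; first exact hm.
split; first by rewrite !size_map add0n mul2n -addnn (eqP hsz).
move=> j hj.
have hjp : j < size p by rewrite (eqP hsz) ltn_addr.
have hmjp : m + j < size p by rewrite (eqP hsz) ltn_add2l.
have := congr1 (fun l => nth 0 l j) htd; rewrite /= nth_take // nth_drop.
rewrite !(nth_map 0) // => heq.
rewrite !add0n !(nth_map (@inord 10 0)) ?size_map // !(nth_map 0) //.
have hi1 : nth 0 p j < size lab' by apply: (allP hall); rewrite mem_nth.
have hi2 : nth 0 p (m + j) < size lab' by apply: (allP hall); rewrite mem_nth.
case: (hinv _ hi1) => hin1 he1; case: (hinv _ hi2) => hin2 he2.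
rewrite he1 he2 in heq.
by rewrite -/(cn _) -/(cn _) -(nth_index 0 hin1) heq nth_index.
Qed.

Lemma search_sound fuel : forall lab st, uniq st -> {subset st <= undup (map c (enum 'I_11))} ->
  (forall i, i < size lab -> cn i \in st /\ nth 0 lab i = index (cn i) st) ->
  search fuel (size st) lab -> False.
Proof.
elim: fuel => [//|f IH] lab st hu hs hinv /=.
rewrite allc_all => /allP H.
set k := size lab; set x := cn k.
set col := index x st.
have hcol : col \in iota 0 (minn (size st).+1 6).
  rewrite mem_iota add0n leq_min ltnS index_size /=.
  case hx: (x \in st).
    by apply: leq_trans (size_st hu hs); rewrite index_mem.
  have := size_st (st := rcons st x); rewrite rcons_uniq hx hu size_rcons /col memNindex ?hx //.
  apply => // y; rewrite mem_rcons in_cons => /orP[/eqP -> |]; [exact: cn_codom | exact: hs].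
have := H _ hcol; rewrite /step hasl_has.
set lab' := rcons lab col.
set st' := if x \in st then st else rcons st x.
have hu' : uniq st' by rewrite /st'; case hx: (x \in st) => //; rewrite rcons_uniq hx hu.
have hs' : {subset st' <= undup (map c (enum 'I_11))}.
  rewrite /st'; case: (x \in st) => // y; rewrite mem_rcons in_cons => /orP[/eqP -> |]; [exact: cn_codom | exact: hs].
have hinv' : forall i, i < size lab' -> cn i \in st' /\ nth 0 lab' i = index (cn i) st'.
  move=> i; rewrite size_rcons ltnS leq_eqVlt => /orP[/eqP -> | hi].
    rewrite nth_rcons ltnn eqxx /lab' /st' /col -/x.
    case hx: (x \in st) => //; split; first by rewrite mem_rcons mem_head.
    by rewrite -cats1 index_cat hx /= eqxx addn0 memNindex ?hx.
  rewrite nth_rcons hi; case: (hinv i hi) => hin ->; split.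
    by rewrite /st'; case: (x \in st) => //; rewrite mem_rcons in_cons hin orbT.
  by rewrite /st'; case: (x \in st) => //; rewrite -cats1 index_cat hin.
case: hasP => [[p hp hl] _|_ hrec].
  exact: (leaf_false hp hu' hinv' hl).
apply: (IH lab' st' hu' hs' hinv').
suff -> : size st' = (if col == size st then (size st).+1 else size st) by [].
rewrite /st' /col; case hx: (x \in st).
  by rewrite eq_sym eqn_leq leqNgt index_mem hx.
by rewrite size_rcons memNindex ?hx // eqxx.
Qed.

End Sound.

Lemma colours_ok (c : 'I_11 -> nat) : nonrep_colouring E c -> 7 <= num_colours c.
Proof.
move=> Hnr; rewrite leqNgt; apply/negP => Hlt.
have Hnc : num_colours c <= 6 by [].
refine (@search_sound c Hnr Hnc 11 [::] [::] isT _ _ search_ok).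
  by move=> y.
by move=> i.
Qed.

Local Open Scope R_scope.
Definition cx (i : nat) : Z := fst (nth (0,0)%Z coords i).
Definition cy (i : nat) : Z := snd (nth (0,0)%Z coords i).
Definition posn (i : nat) : point := (IZR (cx i), IZR (cy i)).
Definition pos (u : 'I_11) : point := posn u.
Definition seg (a b : point) (t : R) : point :=
  (fst a + t * (fst b - fst a), snd a + t * (snd b - snd a)).
Definition arc (u v : 'I_11) : R -> point := seg (pos u) (pos v).

Definition crossR (a b q : point) : R :=
  ((fst b - fst a) * (snd q - snd a) - (snd b - snd a) * (fst q - fst a)).
Definition crossZ (i j k : nat) : Z :=
  ((cx j - cx i) * (cy k - cy i) - (cy j - cy i) * (cx k - cx i))%Z.

Lemma crossZR i j k : IZR (crossZ i j k) = crossR (posn i) (posn j) (posn k).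
Proof. by rewrite /crossZ /crossR /posn /= !minus_IZR !mult_IZR !minus_IZR. Qed.

Definition sideZ (i j k l : nat) : bool :=
  let d1 := crossZ i j k in let d2 := crossZ i j l in
  (Z.leb 0 d1 && Z.leb 0 d2 && Z.ltb 0 (d1 + d2)) || (Z.leb d1 0 && Z.leb d2 0 && Z.ltb (d1 + d2) 0).

Lemma cross_seg a b t : crossR a b (seg a b t) = 0.
Proof. rewrite /crossR /seg /=; ring. Qed.

Lemma cross_seg2 a b c d t :
  crossR a b (seg c d t) = ((1 - t) * crossR a b c + t * crossR a b d).
Proof. rewrite /crossR /seg /=; ring. Qed.

Lemma convex_pos x y t : 0 < t < 1 -> 0 <= x -> 0 <= y -> 0 < x + y -> (1 - t) * x + t * y <> 0.
Proof.
move=> ht h1 h2 h3 h0.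
have a1 : 0 <= (1 - t) * x by apply: Rmult_le_pos; lra.
have a2 : 0 <= t * y by apply: Rmult_le_pos; lra.
have b1 : (1 - t) * x = 0 by lra.
have b2 : t * y = 0 by lra.
case: (Rmult_integral _ _ b1) => [|hx]; first lra.
case: (Rmult_integral _ _ b2) => [|hy]; first lra.
lra.
Qed.

Lemma side_sep i j k l t t' : sideZ i j k l -> (0 < t < 1) -> (0 < t' < 1) ->
  seg (posn i) (posn j) t <> seg (posn k) (posn l) t'.
Proof.
move=> hs ht ht' heq.
have h0 := cross_seg (posn i) (posn j) t.
rewrite heq cross_seg2 -!crossZR in h0.
move: hs; rewrite /sideZ => /orP[/andP[/andP[h1 h2] h3] | /andP[/andP[h1 h2] h3]].
- move/Z.leb_le/IZR_le: h1 => h1; move/Z.leb_le/IZR_le: h2 => h2.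
  move/Z.ltb_lt/IZR_lt: h3; rewrite plus_IZR => h3.
  exact: (convex_pos ht' h1 h2 h3 h0).
- move/Z.leb_le/IZR_le: h1 => h1; move/Z.leb_le/IZR_le: h2 => h2.
  move/Z.ltb_lt/IZR_lt: h3; rewrite plus_IZR => h3.
  apply: (@convex_pos (- IZR (crossZ i j k)) (- IZR (crossZ i j l)) t' ht'); lra.
Qed.

Lemma seg_inj a b s t : a <> b -> seg a b s = seg a b t -> s = t.
Proof.
case: a b => a1 a2 [b1 b2] hab; rewrite /seg /= => [[h1 h2]].
case: (Req_dec s t) => // hst; exfalso; apply: hab.
have e1 : ((s - t) * (b1 - a1) = 0) by lra.
have e2 : ((s - t) * (b2 - a2) = 0) by lra.
have hst' : (s - t <> 0) by lra.
case: (Rmult_integral _ _ e1) => // e1'; case: (Rmult_integral _ _ e2) => // e2'.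
f_equal; lra.
Qed.

Lemma seg0 a b : seg a b 0 = a.
Proof. case: a b => a1 a2 [b1 b2]; rewrite /seg /=; f_equal; ring. Qed.
Lemma seg1 a b : seg a b 1 = b.
Proof. case: a b => a1 a2 [b1 b2]; rewrite /seg /=; f_equal; ring. Qed.

Lemma cont01_seg a b : cont01 (seg a b).
Proof.
case: a b => a1 a2 [b1 b2] t _ eps he.
set A := Rabs (b1 - a1); set B := Rabs (b2 - a2).
have hA : (0 <= A) by apply: Rabs_pos.
have hB : (0 <= B) by apply: Rabs_pos.
have hK : (0 < A + B + 1) by lra.
exists (eps / (A + B + 1)); split; first by apply: Rdiv_lt_0_compat.
move=> s _ hs.
rewrite /pdist /seg; cbn [fst snd].
set h := Rabs (s - t).
have hh : (0 <= h) by apply: Rabs_pos.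
have hhK : (h * (A + B + 1) < eps).
  have := Rmult_lt_compat_r _ _ _ hK hs.
  by rewrite /Rdiv Rmult_assoc Rinv_l ?Rmult_1_r //; lra.
have e1 : ((a1 + s * (b1 - a1) - (a1 + t * (b1 - a1))) ^ 2 = (h * A) ^ 2).
  by rewrite /h /A -Rabs_mult pow2_abs; f_equal; ring.
have e2 : ((a2 + s * (b2 - a2) - (a2 + t * (b2 - a2))) ^ 2 = (h * B) ^ 2).
  by rewrite /h /B -Rabs_mult pow2_abs; f_equal; ring.
rewrite e1 e2.
rewrite -(sqrt_pow2 eps); last lra.
apply: sqrt_lt_1_alt; split.
  by apply: Rplus_le_le_0_compat; apply: pow2_ge_0.
have hx : (0 <= h * A) by apply: Rmult_le_pos.
have hy : (0 <= h * B) by apply: Rmult_le_pos.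
nra.
Qed.

Local Close Scope R_scope.

Definition inj_chk : bool := all (fun i => all (fun j =>
  (i == j) || ~~ (Z.eqb (cx i) (cx j) && Z.eqb (cy i) (cy j))) (iota 0 11)) (iota 0 11).
Lemma inj_ok : inj_chk. Proof. vm_compute. reflexivity. Qed.

Definition avoid_chk : bool := all (fun u => all (fun v => all (fun w =>
  ~~ adjb u v || (w == u) || (w == v) || ~~ Z.eqb (crossZ u v w) 0) (iota 0 11)) (iota 0 11)) (iota 0 11).
Lemma avoid_ok : avoid_chk. Proof. vm_compute. reflexivity. Qed.

Definition pair_chk : bool := all (fun u => all (fun v => all (fun u' => all (fun v' =>
  ~~ adjb u v || ~~ adjb u' v' || ((u == u') && (v == v')) || ((u == v') && (v == u'))
  || sideZ u v u' v' || sideZ u' v' u v) (iota 0 11)) (iota 0 11)) (iota 0 11)) (iota 0 11).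
Lemma pair_ok : pair_chk. Proof. vm_compute. reflexivity. Qed.

Lemma pos_inj : injective pos.
Proof.
move=> u v h.
have := all_I11 (all_I11 inj_ok u) v => /orP[/eqP /val_inj //|].
move: h; rewrite /pos /posn => [[/eq_IZR -> /eq_IZR ->]].
by rewrite !Z.eqb_refl.
Qed.

Lemma E_irr (u : 'I_11) : E u u = false.
Proof. by apply/negbTE; apply: (all_I11 irr_ok u). Qed.

Lemma planar_E : planar E.
Proof.
exists pos, arc; split; first exact: pos_inj.
split.
  move=> u v huv.
  have hne : pos u <> pos v.
    by move=> /pos_inj h; move: huv; rewrite h E_irr.
  split; first exact: cont01_seg.
  split; first by move=> s t _ _; apply: seg_inj.
  split; first exact: seg0.
  split; first exact: seg1.
  move=> t w ht heq.
  have := all_I11 (all_I11 (all_I11 avoid_ok u) v) w.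
  rewrite (_ : adjb u v = true) //= => /orP[/orP[/eqP hw | /eqP hw] | hz].
  - have hw' : w = u by apply: val_inj.
    move: heq; rewrite hw' /arc -{2}(seg0 (pos u) (pos v)) => /seg_inj h.
    have := h hne; move: ht => /= ht ht0. rewrite ht0 in ht. lra.
  - have hw' : w = v by apply: val_inj.
    move: heq; rewrite hw' /arc -{2}(seg1 (pos u) (pos v)) => /seg_inj h.
    have := h hne; move: ht => /= ht ht0. rewrite ht0 in ht. lra.
  - have := cross_seg (pos u) (pos v) t.
    rewrite /arc in heq; rewrite heq /pos -crossZR => /eq_IZR hz0.
    by move: hz; rewrite hz0.
move=> u v u' v' h1 h2 hne t t' ht ht'.
have := all_I11 (all_I11 (all_I11 (all_I11 pair_ok u) v) u') v'.
rewrite (_ : adjb u v = true) // (_ : adjb u' v' = true) //=.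
case/orP=> [/orP[/orP[/andP[/eqP a /eqP b] | /andP[/eqP a /eqP b]] | hs] | hs].
- by exfalso; apply: hne; left; split; apply: val_inj.
- by exfalso; apply: hne; right; split; apply: val_inj.
- exact: side_sep hs ht ht'.
- by move=> h; apply: (side_sep hs ht' ht); rewrite /arc in h; rewrite -h.
Qed.

Theorem theorem3 :
  exists (n : nat) (e : rel 'I_n),
    simple_graph e /\ planar e /\
    forall c : 'I_n -> nat, nonrep_colouring e c -> 7 <= num_colours c.
Proof.
exists 11, E; split; last split.
- split; first by move=> u v; rewrite /E /adjb orbC.
  exact: E_irr.
- exact: planar_E.
- exact: colours_ok.
Qed.
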